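(* Let $m\ge2$ and $0<e_0\le1$. For the problem $P_m, e_{i\le m-1,k}\ge e_0\mid\mid C_{\max}$, the LS-ECT schedule (for any list order) satisfies $\frac{C_{\max}(\text{LS-ECT})}{C^*_{\max}}\le 1+\frac{1}{e_0}$, where $C^*_{\max}$ is the optimal makespan.
   Context: Shared-processing parallel machine scheduling: $m$ identical machines $M_1,\dots,M_m$, $n$ primary jobs available at time $0$ with processing times $p_j>0$, each processed without interruption on one machine, jobs on a machine processed one after another. The time axis of machine $M_i$ is partitioned into consecutive intervals $(0,t_{i,1}],(t_{i,1},t_{i,2}],\dots$ with sharing ratios $e_{i,k}\in(0,1]$; during the $k$-th interval $M_i$ processes primary work at rate $e_{i,k}$. In $P_m, e_{i\le m-1,k}\ge e_0\mid\mid C_{\max}$ all sharing ratios on machines $M_1,\dots,M_{m-1}$ are at least $e_0$, the ratios on $M_m$ are arbitrary in $(0,1]$, and the goal is to minimize the makespan. LS-ECT: given an ordered list of jobs, the jobs are scheduled one by one in list order; each job is appended after the jobs already assigned to some machine, choosing the machine on which it would complete earliest. *)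

(* Defs.v *)
From Stdlib Require Import Reals Lra List.
From Coquelicot Require Import Coquelicot.
Open Scope R_scope.

(* Machines are indexed by 0 .. m-1 (machine i here is M_{i+1} in the paper),
   so machine m-1 is M_m, the machine with arbitrary sharing ratios.
   Interval k of machine i is (t i k, t i (k+1)], with sharing ratio e i k. *)

Definition valid_env (m : nat) (e0 : R) (t e : nat -> nat -> R) : Prop :=
  forall i, (i < m)%nat ->
    t i 0%nat = 0 /\
    (forall k, t i k < t i (S k)) /\
    (forall x, exists k, x <= t i k) /\
    (forall k, 0 < e i k <= 1) /\
    ((S i < m)%nat -> forall k, e0 <= e i k).

(* Amount of primary work machine i can process during (0, x], x >= 0:
   the integral of the piecewise-constant rate (a finite sum, since the
   breakpoints are unbounded). *)
Definition work (t e : nat -> nat -> R) (i : nat) (x : R) : R :=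
  Series (fun k => e i k * (Rmin x (t i (S k)) - Rmin x (t i k))).

Definition completes (t e : nat -> nat -> R) (i : nat) (s p C : R) : Prop :=
  s <= C /\ work t e i C - work t e i s = p.

Definition feasible (m : nat) (t e : nat -> nat -> R) (p : list R)
    (a : nat -> nat) (s c : nat -> R) : Prop :=
  (forall j, (j < length p)%nat ->
      (a j < m)%nat /\ 0 <= s j /\ completes t e (a j) (s j) (nth j p 0) (c j)) /\
  (forall j j', (j < length p)%nat -> (j' < length p)%nat -> j <> j' ->
      a j = a j' -> c j <= s j' \/ c j' <= s j).

Definition makespan (n : nat) (c : nat -> R) : R :=
  fold_right Rmax 0 (map c (seq 0 n)).

Definition upd (L : nat -> R) (i : nat) (v : R) : nat -> R :=
  fun k => if Nat.eqb k i then v else L k.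

(* LS-ECT: jobs are taken in list order; L i is the completion time of the
   last job currently on machine i (0 if none).  Each job is appended on a
   machine where it completes earliest (ties broken arbitrarily). *)
Inductive LSECT (m : nat) (t e : nat -> nat -> R) :
    (nat -> R) -> list R -> (nat -> R) -> Prop :=
| LSECT_nil : forall L, LSECT m t e L nil L
| LSECT_cons : forall L p ps i C L',
    (i < m)%nat ->
    completes t e i (L i) p C ->
    (forall i' C', (i' < m)%nat -> completes t e i' (L i') p C' -> C <= C') ->
    LSECT m t e (upd L i C) ps L' ->
    LSECT m t e L (p :: ps) L'.

Definition max_load (m : nat) (L : nat -> R) : R :=
  fold_right Rmax 0 (map L (seq 0 m)).

(* Main.v *)
Require Import Defs.
From Coquelicot Require Import Coquelicot.
From Stdlib Require Import Reals Lra Lia List Classical.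
Open Scope R_scope.

Fixpoint sumf (f : nat -> R) (n : nat) : R :=
  match n with O => 0 | S n => sumf f n + f n end.

Lemma sumf_ext f g n : (forall j, (j < n)%nat -> f j = g j) -> sumf f n = sumf g n.
Proof. induction n; simpl; intros H; auto. rewrite IHn by (intros; apply H; lia). rewrite H by lia. auto. Qed.

Lemma sumf_le f g n : (forall j, (j < n)%nat -> f j <= g j) -> sumf f n <= sumf g n.
Proof. induction n; simpl; intros H; [lra|]. assert (sumf f n <= sumf g n) by (apply IHn; intros; apply H; lia).
 assert (f n <= g n) by (apply H; lia). lra. Qed.

Lemma sumf_plus f g n : sumf (fun j => f j + g j) n = sumf f n + sumf g n.
Proof. induction n; simpl; [lra|]. rewrite IHn. lra. Qed.

Lemma sumf_zero n : sumf (fun _ => 0) n = 0.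
Proof. induction n; simpl; [lra|]. rewrite IHn; lra. Qed.

Lemma sumf_shift f n : sumf f (S n) = f 0%nat + sumf (fun j => f (S j)) n.
Proof. induction n; simpl in *; [lra|]. rewrite IHn. lra. Qed.

Lemma sumf_exch (g : nat -> nat -> R) m n :
  sumf (fun i => sumf (g i) n) m = sumf (fun j => sumf (fun i => g i j) m) n.
Proof. induction m; simpl. now rewrite sumf_zero. rewrite IHm. rewrite <- sumf_plus. reflexivity. Qed.

Lemma sumf_ind_big a v m : (m <= a)%nat -> sumf (fun i => if Nat.eqb a i then v else 0) m = 0.
Proof. induction m; simpl; intros; auto. rewrite IHm by lia.
 destruct (Nat.eqb_spec a m); [lia|lra]. Qed.

Lemma sumf_ind a v m : (a < m)%nat -> sumf (fun i => if Nat.eqb a i then v else 0) m = v.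
Proof. induction m; simpl; intros; [lia|].
 destruct (Nat.eqb_spec a m).
 - subst. rewrite sumf_ind_big by lia. lra.
 - rewrite IHm by lia. lra. Qed.

Lemma sumf_upd (g : nat -> R -> R) L i v m : (i < m)%nat ->
  sumf (fun k => g k (upd L i v k)) m = sumf (fun k => g k (L k)) m + (g i v - g i (L i)).
Proof. induction m; intros H; simpl; [lia|]. unfold upd at 2.
 destruct (Nat.eqb_spec m i).
 - subst. rewrite (sumf_ext _ (fun k => g k (L k))). lra.
   intros j Hj. unfold upd. destruct (Nat.eqb_spec j i); [lia|auto].
 - rewrite IHm by lia. lra. Qed.

Definition term (T E : nat -> R) x k := E k * (Rmin x (T (S k)) - Rmin x (T k)).
Definition Wf T E x := Series (term T E x).
Definition ws T E N x := sumf (term T E x) N.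

Definition mach (T E : nat -> R) := T 0%nat = 0 /\ (forall k, T k < T (S k)) /\
  (forall x, exists k, x <= T k) /\ (forall k, 0 < E k <= 1).

Lemma Tmono T : (forall k, T k < T (S k)) -> forall k n, (k <= n)%nat -> T k <= T n.
Proof. intros H k n Hkn. induction Hkn; [lra|]. specialize (H m). lra. Qed.

Lemma sum_n_sumf a n : sum_n a n = sumf a (S n).
Proof. induction n. rewrite sum_O. simpl. lra. rewrite sum_Sn, IHn. reflexivity. Qed.

Lemma W_ws T E N x : (forall k, T k < T (S k)) -> x <= T N -> Wf T E x = ws T E N x.
Proof. intros Hi Hx. unfold Wf, Series.
 rewrite (Lim_seq_ext_loc _ (fun _ => ws T E N x)). rewrite Lim_seq_const. reflexivity.
 exists N. intros n Hn. rewrite sum_n_sumf. unfold ws.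
 assert (forall d, sumf (term T E x) (N + d) = sumf (term T E x) N).
 { induction d. now rewrite Nat.add_0_r. rewrite Nat.add_succ_r. simpl. rewrite IHd.
   unfold term. assert (T N <= T (N+d)%nat) by (apply Tmono; auto; lia).
   assert (T (N+d)%nat < T (S (N+d))) by auto.
   rewrite !Rmin_left by lra. lra. }
 replace (S n) with (N + (S n - N))%nat by lia. apply H. Qed.

Lemma d_nonneg x y a b : x <= y -> a <= b -> 0 <= (Rmin y b - Rmin y a) - (Rmin x b - Rmin x a).
Proof. intros. unfold Rmin; repeat destruct Rle_dec; lra. Qed.

Lemma ws_bounds T E N x y lo : x <= y -> 0 <= lo -> (forall k, (k < N)%nat -> lo <= E k <= 1) ->
  (forall k, T k < T (S k)) ->
  lo * ((Rmin y (T N) - Rmin x (T N)) - (Rmin y (T 0%nat) - Rmin x (T 0%nat)))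
    <= ws T E N y - ws T E N x <=
  (Rmin y (T N) - Rmin x (T N)) - (Rmin y (T 0%nat) - Rmin x (T 0%nat)).
Proof. intros Hxy Hlo HE Hi. induction N; unfold ws in *; simpl.
 - replace (Rmin y (T 0%nat) - Rmin x (T 0%nat) - (Rmin y (T 0%nat) - Rmin x (T 0%nat))) with 0 by ring. lra.
 - assert (IH := IHN (fun k Hk => HE k ltac:(lia))).
   assert (Hd := d_nonneg x y (T N) (T (S N)) Hxy ltac:(specialize (Hi N); lra)).
   assert (HEN := HE N ltac:(lia)).
   assert (ty : term T E y N = E N * (Rmin y (T (S N)) - Rmin y (T N))) by reflexivity.
   assert (tx : term T E x N = E N * (Rmin x (T (S N)) - Rmin x (T N))) by reflexivity.
   rewrite ty, tx.
   set (d := (Rmin y (T (S N)) - Rmin y (T N)) - (Rmin x (T (S N)) - Rmin x (T N))) in *.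
   assert (lo * d <= E N * d) by (apply Rmult_le_compat_r; lra).
   assert (E N * d <= d) by (rewrite <- (Rmult_1_l d) at 2; apply Rmult_le_compat_r; lra).
   unfold d in *. rewrite !Rmult_minus_distr_l in *. lra. Qed.

Lemma W_bounds T E lo x y : mach T E -> 0 <= x <= y -> 0 <= lo -> (forall k, lo <= E k) ->
  lo * (y - x) <= Wf T E y - Wf T E x <= y - x.
Proof. intros [H0 [Hi [Hu HE]]] Hxy Hlo Hl. destruct (Hu y) as [N HN].
 rewrite !(W_ws T E N) by (auto; lra).
 assert (B := ws_bounds T E N x y lo ltac:(lra) Hlo (fun k _ => conj (Hl k) (proj2 (HE k))) Hi).
 rewrite H0 in B. rewrite !Rmin_left in B by lra. rewrite Rmin_right with (x := y) in B by lra.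
 rewrite Rmin_right with (x := x) in B by lra. replace (y - x - (0 - 0)) with (y - x) in B by lra. exact B. Qed.

Lemma W_mono T E x y : mach T E -> 0 <= x <= y -> Wf T E x <= Wf T E y.
Proof. intros M H. assert (B := W_bounds T E 0 x y M H ltac:(lra)).
 destruct M as [_ [_ [_ HE]]]. assert (0 * (y - x) <= Wf T E y - Wf T E x) by (apply B; intros k; specialize (HE k); lra). lra. Qed.

Lemma W_lip T E x y : mach T E -> 0 <= x <= y -> Wf T E y - Wf T E x <= y - x.
Proof. intros M H. assert (B := W_bounds T E 0 x y M H ltac:(lra)).
 destruct M as [_ [_ [_ HE]]]. apply B; intros k; specialize (HE k); lra. Qed.

Fixpoint emin (E : nat -> R) n := match n with O => 1 | S n => Rmin (emin E n) (E n) end.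

Lemma emin_pos E n : (forall k, 0 < E k) -> 0 < emin E n.
Proof. intros H; induction n; simpl; [lra|]. unfold Rmin; destruct Rle_dec; auto. Qed.
Lemma emin_le E n k : (k < n)%nat -> emin E n <= E k.
Proof. induction n; intros Hk; simpl; [lia|]. destruct (Nat.eq_dec k n).
 subst; apply Rmin_r. eapply Rle_trans; [apply Rmin_l|]. apply IHn; lia. Qed.

Lemma W_strict T E x y : mach T E -> 0 <= x < y -> Wf T E x < Wf T E y.
Proof. intros [H0 [Hi [Hu HE]]] Hxy. destruct (Hu y) as [N HN].
 rewrite !(W_ws T E N) by (auto; lra).
 assert (P := emin_pos E N ltac:(intros k; apply HE)).
 assert (B := ws_bounds T E N x y (emin E N) ltac:(lra) ltac:(lra)
   (fun k Hk => conj (emin_le E N k Hk) (proj2 (HE k))) Hi).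
 rewrite H0 in B. rewrite !Rmin_left in B by lra. rewrite Rmin_right with (x := y) in B by lra.
 rewrite Rmin_right with (x := x) in B by lra.
 assert (0 < emin E N * (y - x - (0 - 0))) by (apply Rmult_lt_0_compat; lra). lra. Qed.

Lemma cont_Rmin c x0 : continuity_pt (fun x => Rmin x c) x0.
Proof. intros eps Heps. exists eps. split; [lra|]. intros x [_ Hx]. simpl in *. unfold R_dist in *.
 unfold Rmin; repeat destruct Rle_dec; unfold Rabs in *; repeat destruct Rcase_abs; lra. Qed.

Lemma ws_cont T E N : continuity (ws T E N).
Proof. intros x0. induction N.
 - apply continuity_pt_const. intros a b. reflexivity.
 - apply (continuity_pt_plus (ws T E N) (fun x => term T E x N)); auto.
   apply (continuity_pt_scal (fun x => Rmin x (T (S N)) - Rmin x (T N)) (E N)).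
   apply (continuity_pt_minus (fun x => Rmin x (T (S N))) (fun x => Rmin x (T N))); apply cont_Rmin.
Qed.

Lemma W_ivt T E x y w : mach T E -> 0 <= x <= y -> Wf T E x <= w <= Wf T E y ->
  exists z, x <= z <= y /\ Wf T E z = w.
Proof. intros M Hxy Hw. destruct M as [H0 [Hi [Hu HE]]]. destruct (Hu y) as [N HN].
 rewrite !(W_ws T E N) in Hw by (auto; lra).
 assert (C : continuity (fun z => ws T E N z - w)).
 { intros z. apply (continuity_pt_minus (ws T E N) (fun _ => w)). apply ws_cont.
   apply continuity_pt_const. intros a b; reflexivity. }
 destruct (IVT_cor _ x y C ltac:(lra)) as [z [Hz Hz']].
 { assert (0 <= (w - ws T E N x) * (ws T E N y - w)) by (apply Rmult_le_pos; lra). nra. }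
 exists z. split; auto. rewrite (W_ws T E N) by (auto; lra). lra. Qed.

Definition cl s c x := Rmax s (Rmin x c).

Lemma head_case s c x y a b : s < c -> x <= y -> a = Rmax x (Rmin s y) -> b = Rmax a (Rmin c y) ->
  (cl s c y = cl s c x) \/ (cl s c x = a /\ cl s c y = b).
Proof. intros Hsc Hxy -> ->. unfold cl.
 destruct (Rle_dec y s).
 - left. unfold Rmax, Rmin; repeat destruct Rle_dec; lra.
 - destruct (Rle_dec c x).
   + left. unfold Rmax, Rmin; repeat destruct Rle_dec; lra.
   + right. split; unfold Rmax, Rmin; repeat destruct Rle_dec; lra. Qed.

Lemma mid_case sj cj sn cn x y : sj < cj -> sn < cn -> x <= y -> (cj <= sn \/ cn <= sj) ->
  cl sj cj (Rmax x (Rmin sn y)) = cl sj cj (Rmax (Rmax x (Rmin sn y)) (Rmin cn y)).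
Proof. intros. unfold cl, Rmax, Rmin; repeat destruct Rle_dec; lra. Qed.

Lemma disj_sum (P : nat -> bool) (s c : nat -> R) (F : R -> R) n :
 (forall x y, 0 <= x <= y -> F x <= F y) ->
 (forall j, (j < n)%nat -> P j = true -> s j < c j) ->
 (forall j j', (j < n)%nat -> (j' < n)%nat -> j <> j' -> P j = true -> P j' = true ->
     c j <= s j' \/ c j' <= s j) ->
 forall x y, 0 <= x <= y ->
 sumf (fun j => if P j then F (cl (s j) (c j) y) - F (cl (s j) (c j) x) else 0) n <= F y - F x.
Proof. intros Hm. induction n; intros Hsc Hd x y Hxy; simpl.
 - assert (F x <= F y) by auto; lra.
 - assert (IH : forall x y, 0 <= x <= y ->
     sumf (fun j => if P j then F (cl (s j) (c j) y) - F (cl (s j) (c j) x) else 0) n <= F y - F x).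
   { apply IHn. intros; apply Hsc; auto; lia. intros; apply Hd; auto; lia. }
   destruct (P n) eqn:Pn.
   2: { rewrite Rplus_0_r; apply IH; auto. }
   set (a := Rmax x (Rmin (s n) y)). set (b := Rmax a (Rmin (c n) y)).
   assert (Hsn := Hsc n ltac:(lia) Pn).
   assert (x <= a /\ a <= b /\ b <= y) as [Ha [Hab Hb]] by (unfold b, a, Rmax, Rmin; repeat destruct Rle_dec; lra).
   rewrite (sumf_ext _ (fun j => (if P j then F (cl (s j) (c j) y) - F (cl (s j) (c j) b) else 0)
      + ((if P j then F (cl (s j) (c j) b) - F (cl (s j) (c j) a) else 0)
      + (if P j then F (cl (s j) (c j) a) - F (cl (s j) (c j) x) else 0))))
     by (intros; destruct (P j); ring).
   rewrite !sumf_plus.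
   rewrite (sumf_ext (fun j => if P j then F (cl (s j) (c j) b) - F (cl (s j) (c j) a) else 0) (fun _ => 0)).
   2: { intros j Hj. destruct (P j) eqn:Pj; [|auto].
        unfold b, a. rewrite <- (mid_case (s j) (c j) (s n) (c n) x y); try lra.
        apply Hsc; auto; lia. apply Hd; auto; lia. }
   rewrite sumf_zero.
   assert (I1 := IH b y ltac:(lra)). assert (I2 := IH x a ltac:(lra)).
   destruct (head_case (s n) (c n) x y a b Hsn ltac:(lra) eq_refl eq_refl) as [E1|[E1 E2]].
   + rewrite E1. assert (F a <= F b) by (apply Hm; lra). lra.
   + rewrite E1, E2. lra. Qed.

Definition cap t e i x := work t e i x - work t e i 0.

Lemma valid_mach m e0 t e i : valid_env m e0 t e -> (i < m)%nat -> mach (t i) (e i).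
Proof. intros Hv Hi. destruct (Hv i Hi) as [H1 [H2 [H3 [H4 _]]]]. repeat split; auto; apply H4. Qed.

Lemma sumf_S f n : sumf f (S n) = sumf f n + f n.
Proof. reflexivity. Qed.

Lemma fold_pos' l Cs : Forall (fun x => 0 < x <= Cs) l -> 0 <= fold_right Rplus 0 l.
Proof. induction l; simpl; intros H; [lra|]. inversion H; subst. assert (0 <= fold_right Rplus 0 l) by auto. lra. Qed.

Lemma inv m e0 t e Cs : 0 < e0 -> valid_env m e0 t e -> 0 <= Cs ->
 forall L ps L', LSECT m t e L ps L' ->
 (forall i, (i < m)%nat -> 0 <= L i <= (1 + 1 / e0) * Cs) ->
 Forall (fun x => 0 < x <= Cs) ps ->
 sumf (fun i => cap t e i (L i)) m + fold_right Rplus 0 ps <= sumf (fun i => cap t e i Cs) m ->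
 forall i, (i < m)%nat -> 0 <= L' i <= (1 + 1 / e0) * Cs.
Proof.
 intros He0 Hv HCs L ps L' H.
 induction H as [L | L p ps i C L' Hi Hc Hmin Hrest IH]; intros HL HF Hsum; auto.
 inversion HF as [|? ? Hp HF']; subst.
 assert (HB: (1 + 1 / e0) * Cs = Cs + Cs / e0) by (field; lra).
 assert (Hdiv: 0 <= Cs / e0) by (unfold Rdiv; apply Rmult_le_pos; [lra| left; apply Rinv_0_lt_compat; lra]).
 assert (HC : C <= (1 + 1 / e0) * Cs).
 { destruct (classic (exists i0, (S i0 < m)%nat /\ L i0 < Cs)) as [[i0 [Hi0 HLi0]]|Hno].
   - assert (M := valid_mach m e0 t e i0 Hv ltac:(lia)).
     assert (Hlo : forall k, e0 <= e i0 k) by (intros k; destruct (Hv i0 ltac:(lia)) as [_ [_ [_ [_ H5]]]]; apply H5; auto).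
     set (y := L i0 + p / e0).
     assert (Hpe: p / e0 <= Cs / e0) by (apply Rmult_le_compat_r; [left; apply Rinv_0_lt_compat; lra| lra]).
     assert (Hpe0: 0 <= p / e0) by (unfold Rdiv; apply Rmult_le_pos; [lra| left; apply Rinv_0_lt_compat; lra]).
     assert (HL0 := HL i0 ltac:(lia)).
     assert (Hw := W_bounds (t i0) (e i0) e0 (L i0) y M ltac:(unfold y; lra) ltac:(lra) Hlo).
     assert (Hee : e0 * (y - L i0) = p) by (unfold y; field; lra).
     assert (Hm0 := W_mono (t i0) (e i0) (L i0) y M ltac:(unfold y; lra)).
     destruct (W_ivt (t i0) (e i0) (L i0) y (Wf (t i0) (e i0) (L i0) + p) M ltac:(unfold y; lra) ltac:(lra))
       as [z [Hz Hwz]].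
     assert (C <= z).
     { apply (Hmin i0 z); [lia|]. split; [lra|]. change (Wf (t i0) (e i0) z - Wf (t i0) (e i0) (L i0) = p). lra. }
     unfold y in Hz. lra.
   - destruct m as [|m']; [lia|].
     assert (Hno' : forall i0, (S i0 < S m')%nat -> Cs <= L i0).
     { intros i0 Hi0. destruct (Rle_dec Cs (L i0)); auto. exfalso. apply Hno. exists i0. split; auto. lra. }
     rewrite !sumf_S in Hsum. simpl fold_right in Hsum.
     assert (sumf (fun i => cap t e i Cs) m' <= sumf (fun i => cap t e i (L i)) m').
     { apply sumf_le. intros j Hj. unfold cap.
       assert (Wf (t j) (e j) Cs <= Wf (t j) (e j) (L j)).
       { apply W_mono. apply (valid_mach _ e0 t e j Hv); lia. split; auto. apply Hno'. lia. }
       change (Wf (t j) (e j) Cs - work t e j 0 <= Wf (t j) (e j) (L j) - work t e j 0). lra. }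
     assert (Hr := fold_pos' ps Cs HF').
     assert (M := valid_mach _ e0 t e m' Hv ltac:(lia)).
     assert (HLm := HL m' ltac:(lia)).
     assert (Hk : Wf (t m') (e m') (L m') + p <= Wf (t m') (e m') Cs).
     { unfold cap in *. change (work t e m' (L m')) with (Wf (t m') (e m') (L m')) in *.
       change (work t e m' Cs) with (Wf (t m') (e m') Cs) in *. lra. }
     assert (HLC : L m' <= Cs).
     { destruct (Rle_dec (L m') Cs); auto. assert (Wf (t m') (e m') Cs <= Wf (t m') (e m') (L m')) by (apply W_mono; auto; lra). lra. }
     assert (Hm0 := W_mono (t m') (e m') (L m') Cs M ltac:(lra)).
     destruct (W_ivt (t m') (e m') (L m') Cs (Wf (t m') (e m') (L m') + p) M ltac:(lra) ltac:(lra))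
       as [z [Hz Hwz]].
     assert (C <= z).
     { apply (Hmin m' z); [lia|]. split; [lra|]. change (Wf (t m') (e m') z - Wf (t m') (e m') (L m') = p). lra. }
     lra. }
 destruct Hc as [Hc1 Hc2].
 apply IH.
 - intros i' Hi'. unfold upd. destruct (Nat.eqb i' i); auto. assert (HLi := HL i Hi). lra.
 - auto.
 - rewrite (sumf_upd (cap t e) L i C m Hi). simpl fold_right in Hsum.
   assert (cap t e i C - cap t e i (L i) = p) by (unfold cap; lra). lra.
Qed.

Lemma fold_Rmax_ge0 l : 0 <= fold_right Rmax 0 l.
Proof. induction l; simpl; [lra|]. eapply Rle_trans; [exact IHl| apply Rmax_r]. Qed.

Lemma fold_Rmax_in x l : In x l -> x <= fold_right Rmax 0 l.
Proof. induction l; simpl; [tauto|]. intros [->|H]. apply Rmax_l. eapply Rle_trans; [apply IHl; auto| apply Rmax_r]. Qed.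

Lemma fold_Rmax_le l B : 0 <= B -> (forall x, In x l -> x <= B) -> fold_right Rmax 0 l <= B.
Proof. induction l; simpl; intros; auto. apply Rmax_lub; auto. Qed.

Lemma fold_sumf l : fold_right Rplus 0 l = sumf (fun j => nth j l 0) (length l).
Proof. induction l; [reflexivity|]. cbn [fold_right length]. rewrite sumf_shift, IHl. reflexivity. Qed.

Theorem theorem4 (m : nat) (e0 : R) (t e : nat -> nat -> R) (p : list R) :
  (2 <= m)%nat -> 0 < e0 <= 1 -> valid_env m e0 t e ->
  Forall (fun x => 0 < x) p ->
  forall Lf : nat -> R, LSECT m t e (fun _ => 0) p Lf ->
  forall (a : nat -> nat) (s c : nat -> R), feasible m t e p a s c ->
  max_load m Lf <= (1 + 1 / e0) * makespan (length p) c.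
Proof.
 intros Hm He0 Hv Hp Lf HLS a s c [Hf Hdisj].
 set (n := length p) in *. set (Cs := makespan n c).
 assert (HCs0 : 0 <= Cs) by apply fold_Rmax_ge0.
 assert (Hcj : forall j, (j < n)%nat -> c j <= Cs).
 { intros j Hj. apply fold_Rmax_in. apply in_map. apply in_seq. lia. }
 assert (Hpj : forall j, (j < n)%nat -> 0 < nth j p 0) by (intros j Hj; exact (proj1 (Forall_nth _ _) Hp j 0 Hj)).
 assert (Hsc : forall j, (j < n)%nat -> s j < c j).
 { intros j Hj. destruct (Hf j Hj) as [_ [_ [Hle Hw]]]. assert (Hpp := Hpj j Hj).
   destruct (Rle_lt_or_eq_dec _ _ Hle); auto. rewrite e1 in Hw. lra. }
 assert (HpC : forall j, (j < n)%nat -> nth j p 0 <= Cs).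
 { intros j Hj. destruct (Hf j Hj) as [Ha [Hs [Hle Hw]]].
   assert (Hl := W_lip (t (a j)) (e (a j)) (s j) (c j) (valid_mach m e0 t e (a j) Hv Ha) ltac:(lra)).
   change (Wf (t (a j)) (e (a j)) (c j) - Wf (t (a j)) (e (a j)) (s j) = nth j p 0) in Hw.
   assert (Hc := Hcj j Hj). lra. }
 assert (HB0 : 0 <= (1 + 1 / e0) * Cs).
 { apply Rmult_le_pos; auto. assert (0 < 1 / e0) by (apply Rdiv_lt_0_compat; lra). lra. }
 assert (Hfin : forall i, (i < m)%nat -> 0 <= Lf i <= (1 + 1 / e0) * Cs).
 { apply (inv m e0 t e Cs ltac:(lra) Hv HCs0 _ _ _ HLS).
   - intros; lra.
   - apply Forall_nth. intros j d Hj. rewrite nth_indep with (d' := 0) by auto. split; auto.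
   - rewrite (sumf_ext _ (fun _ => 0)) by (intros; unfold cap; lra). rewrite sumf_zero, Rplus_0_l.
     rewrite fold_sumf. fold n.
     rewrite (sumf_ext _ (fun j => sumf (fun i => if Nat.eqb (a j) i then nth j p 0 else 0) m)).
     2: { intros j Hj. rewrite sumf_ind; auto. apply (Hf j Hj). }
     rewrite <- (sumf_exch (fun i j => if Nat.eqb (a j) i then nth j p 0 else 0)).
     apply sumf_le. intros i Hi.
     assert (M := valid_mach m e0 t e i Hv Hi).
     rewrite (sumf_ext _ (fun j => if Nat.eqb (a j) i then
        work t e i (cl (s j) (c j) Cs) - work t e i (cl (s j) (c j) 0) else 0)).
     2: { intros j Hj. destruct (Nat.eqb_spec (a j) i); auto. subst i.
          destruct (Hf j Hj) as [Ha [Hs [Hle Hw]]]. assert (Hc := Hcj j Hj). assert (Hs' := Hsc j Hj).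
          replace (cl (s j) (c j) Cs) with (c j) by (unfold cl, Rmax, Rmin; repeat destruct Rle_dec; lra).
          replace (cl (s j) (c j) 0) with (s j) by (unfold cl, Rmax, Rmin; repeat destruct Rle_dec; lra).
          lra. }
     unfold cap. apply (disj_sum (fun j => Nat.eqb (a j) i) s c (work t e i) n).
     + intros x y Hxy. apply (W_mono _ _ x y M Hxy).
     + intros j Hj _. auto.
     + intros j j' Hj Hj' Hne P1 P2. apply Hdisj; auto.
       apply Nat.eqb_eq in P1, P2. congruence.
     + lra. }
 unfold max_load. apply fold_Rmax_le; auto.
 intros x Hx. apply in_map_iff in Hx. destruct Hx as [i [<- Hi]]. apply in_seq in Hi.
 apply Hfin. lia.
Qed.
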